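(* Let $(\Omega,\mathcal F)$ be a measurable space with $\Sigma\neq\emptyset$ (where $\Sigma$ is defined in the context). Let $v:\mathcal F\to\mathbb R$ be a non-decreasing and continuous set function with $v(\emptyset)=0$. Then the following four conditions are equivalent. (a) $v$ is submodular, i.e. $v(A)+v(B)\ge v(A\cup B)+v(A\cap B)$ for all $A,B\in\mathcal F$. (b) For every $\mathcal I\in\Sigma$, the extremal measure $\mu_{v,\mathcal I}$ belongs to $\mathcal C_{-,v}(\Omega)$. (c) $v(A)=\sup_{\mathcal I\in\Sigma}\mu_{v,\mathcal I}(A)$ for all $A\in\mathcal F$. (d) For all $A,B\in\mathcal F$ with $B\subset A$, $v(B)=\sup_{\mu\in\mathcal C_{-,v}(A)}\mu(B)$.
   Context: Let $(\Omega,\mathcal F)$ be a measurable space. $\Sigma$ denotes the set of all classes $\mathcal I\subset\mathcal F$ that are chains (totally ordered by inclusion), contain $\emptyset$ and $\Omega$, and satisfy $\sigma[\mathcal I]=\mathcal F$ (the smallest $\sigma$-algebra containing $\mathcal I$ is $\mathcal F$). A set function $v:\mathcal F\to\mathbb R$ is non-decreasing if $v(A)\le v(B)$ whenever $A\subset B$. For $\mathcal I\in\Sigma$, let $\mathcal J$ be the algebra generated by $\mathcal I$; its elements are exactly the sets $\bigcup_{i=1}^n (C_i\cap D_i^c)$ with $C_1\supset D_1\supset C_2\supset\cdots\supset C_n\supset D_n$, $C_i,D_i\in\mathcal I$. For non-decreasing $v$ define the finitely additive set function $\mu_{v,\mathcal I}$ on $\mathcal J$ by $\mu_{v,\mathcal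 I}(\bigcup_{i=1}^n (C_i\cap D_i^c))=\sum_{i=1}^n (v(C_i)-v(D_i))$ (the unique finitely additive extension of $\mu_{v,\mathcal I}(I)=v(I)$, $I\in\mathcal I$). A non-decreasing $v$ is called continuous if for every $\mathcal I\in\Sigma$ this $\mu_{v,\mathcal I}$ is $\sigma$-additive on $\mathcal J$; then it extends uniquely to a measure on $\mathcal F$, again denoted $\mu_{v,\mathcal I}$ and called the extremal measure of $v$ corresponding to $\mathcal I$. For $A\in\mathcal F$, $\mathcal M(A)$ is the set of finite measures on $(A,\mathcal F|_A)$, and $\mathcal C_{-,v}(A)=\{\mu\in\mathcal M(A)\mid \mu(A)=v(A),\ \mu(B)\le v(B)\text{ for all }B\in\mathcal F,\ B\subset A\}$. *)

(* Defs.v *)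
From HB Require Import structures.
From mathcomp Require Import all_boot all_order all_algebra.
From mathcomp Require Import all_classical all_reals all_analysis.
Set Implicit Arguments. Unset Strict Implicit. Unset Printing Implicit Defensive.
Import Order.TTheory GRing.Theory Num.Theory.
Import numFieldNormedType.Exports.
Local Open Scope classical_set_scope.
Local Open Scope ring_scope.

Section Defs.
Context {d : measure_display} {T : measurableType d} {R : realType}.

Definition in_Sigma (I : set (set T)) : Prop :=
  [/\ I `<=` measurable,
      (forall X Y, I X -> I Y -> X `<=` Y \/ Y `<=` X),
      I set0, I setT &
      <<s I >> = measurable].

Definition nondecreasing_sf (v : set T -> R) : Prop :=
  forall A B, measurable A -> measurable B -> A `<=` B -> v A <= v B.

(* A = \bigcup_{i<n} (C_i \cap D_i^c) with C_0 ⊇ D_0 ⊇ C_1 ⊇ ... ⊇ C_{n-1} ⊇ D_{n-1},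
   C_i, D_i \in I  (indices shifted to start at 0) *)
Definition J_rep (I : set (set T)) (A : set T) (n : nat) (C D : nat -> set T) : Prop :=
  [/\ (forall i, (i < n)%N -> I (C i) /\ I (D i)),
      (forall i, (i < n)%N -> D i `<=` C i),
      (forall i, (i.+1 < n)%N -> C i.+1 `<=` D i) &
      A = \bigcup_(i < n) (C i `&` ~` D i)].

Definition J_alg (I : set (set T)) : set (set T) :=
  [set A | exists n C D, J_rep I A n C D].

(* mu_{v,I} on J : value given by (any) representation *)
Definition mu_J (v : set T -> R) (I : set (set T)) (A : set T) : R :=
  xget 0 [set x | exists n C D, J_rep I A n C D /\
                    x = \sum_(i < n) (v (C i) - v (D i))].

Definition continuous_sf (v : set T -> R) : Prop :=
  forall I, in_Sigma I ->
  forall F : nat -> set T, (forall k, J_alg I (F k)) -> trivIset setT F ->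
    J_alg I (\bigcup_k F k) ->
    (fun n => \sum_(k < n) mu_J v I (F k)) @ \oo --> mu_J v I (\bigcup_k F k).

Definition extremal_measure (v : set T -> R) (I : set (set T))
  (mu : {measure set T -> \bar R}) : Prop :=
  forall A, J_alg I A -> mu A = (mu_J v I A)%:E.

(* C_{-,v}(A); a finite measure on (A, F|_A) is represented by a measure on T
   vanishing outside A *)
Definition core_minus (v : set T -> R) (A : set T) : set {measure set T -> \bar R} :=
  [set mu | [/\ mu (~` A) = 0%E, mu A = (v A)%:E &
           forall B, measurable B -> B `<=` A -> (mu B <= (v B)%:E)%E]].

Definition submodular_sf (v : set T -> R) : Prop :=
  forall A B, measurable A -> measurable B ->
    v (A `|` B) + v (A `&` B) <= v A + v B.

End Defs.

(* Main.v *)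
Require Import Defs.
From HB Require Import structures.
From mathcomp Require Import all_boot all_order all_algebra.
From mathcomp Require Import all_classical all_reals all_analysis.
From mathcomp Require Import lra.
Import Order.TTheory GRing.Theory Num.Theory.
Import numFieldNormedType.Exports.
Local Open Scope classical_set_scope.
Local Open Scope ring_scope.

Section Part1.
Context {d : measure_display} {T : measurableType d} {R : realType}.
Implicit Types (I : set (set T)) (v : set T -> R).

Definition chain I := forall X Y, I X -> I Y -> X `<=` Y \/ Y `<=` X.

Lemma chainI I X Y : chain I -> I X -> I Y -> I (X `&` Y).
Proof.
move=> ch IX IY; case: (ch X Y IX IY) => H.
  by rewrite setIidl.
by rewrite setIidr.
Qed.

Lemma chainU I X Y : chain I -> I X -> I Y -> I (X `|` Y).
Proof.
move=> ch IX IY; case: (ch X Y IX IY) => H.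
  by rewrite setUidr.
by rewrite setUidl.
Qed.

Lemma nest_rep (C D : nat -> set T) n :
  (forall i, (i < n)%N -> D i `<=` C i) ->
  (forall i, (i.+1 < n)%N -> C i.+1 `<=` D i) ->
  forall i j, (i < j)%N -> (j < n)%N -> C j `<=` D i.
Proof.
move=> DC CD i; elim=> [//|j IH] ij jn.
have jn' : (j < n)%N by apply: ltn_trans jn.
rewrite ltnS leq_eqVlt in ij; case/orP: ij => [/eqP ->|ij]; first exact: CD jn.
apply: subset_trans (CD _ jn) _; apply: subset_trans (DC _ jn') _.
exact: IH.
Qed.

Lemma mu_J_eq v I A r :
  (exists n C D, J_rep I A n C D) ->
  (forall n C D, J_rep I A n C D -> \sum_(i < n) (v (C i) - v (D i)) = r) ->
  mu_J v I A = r.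
Proof.
move=> [n [C [D rep]]] H; rewrite /mu_J.
have [|m [C' [D' [rep' ->]]]] := xgetPex 0 (P := [set x | exists n C D, J_rep I A n C D /\
                    x = \sum_(i < n) (v (C i) - v (D i))]).
  by exists (\sum_(i < n) (v (C i) - v (D i))); exists n, C, D.
exact: H.
Qed.

Lemma interval_sum v I : chain I -> forall n (C D : nat -> set T) C0 D0,
  (forall i, (i < n)%N -> I (C i) /\ I (D i)) ->
  (forall i, (i < n)%N -> D i `<=` C i) ->
  (forall i, (i.+1 < n)%N -> C i.+1 `<=` D i) ->
  I C0 -> I D0 -> D0 `<=` C0 ->
  \bigcup_(i < n) (C i `&` ~` D i) = C0 `&` ~` D0 ->
  \sum_(i < n) (v (C i) - v (D i)) = v C0 - v D0.
Proof.
move=> ch; elim=> [|n IH] C D C0 D0 ICD DC CD IC0 ID0 D0C0 E.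
  rewrite big_ord0.
  have -> : C0 = D0; last by rewrite subrr.
  apply/seteqP; split => // x C0x; apply/not_notP => D0x.
  have : (C0 `&` ~` D0) x by [].
  by rewrite -E => -[i /= ].
rewrite big_ord_recr /=.
have nest := @nest_rep C D n.+1 DC CD.
have [ICn IDn] := ICD n (ltnSn n).
have ICD' i : (i < n)%N -> I (C i) /\ I (D i).
  by move=> ?; apply: ICD; apply: ltnW.
have DC' i : (i < n)%N -> D i `<=` C i by move=> ?; apply: DC; apply: ltnW.
have CD' i : (i.+1 < n)%N -> C i.+1 `<=` D i by move=> ?; apply: CD; apply: ltnW.
have [empty|/existsPNP [x Cnx Dnx]] := pselect (C n `<=` D n).
  have -> : v (C n) = v (D n).
    by congr v; apply/seteqP; split => //; apply: DC.
  rewrite subrr addr0; apply: IH => //.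
  rewrite -E; apply/seteqP; split => y.
    by move=> [i /= ilt Hy]; exists i => //=; apply: ltnW.
  move=> [i /= ilt [Cy Dy]]; rewrite ltnS leq_eqVlt in ilt.
  case/orP: ilt => [/eqP ein|ilt]; last by exists i.
  by exfalso; apply: Dy; rewrite ein; apply: empty; rewrite -ein.
have XE y : (C0 `&` ~` D0) y <-> exists2 i, (i < n.+1)%N & (C i `&` ~` D i) y.
  by rewrite -E.
have [C0x D0x] : (C0 `&` ~` D0) x by apply/XE; exists n.
have DnD0 : D n = D0.
  apply/seteqP; split => y Hy.
  - apply/not_notP => D0y.
    have DnC0 : D n `<=` C0.
      case: (ch _ _ IDn IC0) => // H; exfalso; exact: Dnx (H _ C0x).
    have [i ilt [_ Diy]] : exists2 i, (i < n.+1)%N & (C i `&` ~` D i) y.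
      by apply/XE; split => //; apply: DnC0.
    apply: Diy; rewrite ltnS leq_eqVlt in ilt; case/orP: ilt => [/eqP -> //|ilt].
    by apply: (nest i n ilt (ltnSn n)); apply: DC.
  - apply/not_notP => Dny.
    have D0Cn : D0 `<=` C n.
      case: (ch _ _ IC0 ICn) => [_|H].
        case: (ch _ _ ID0 ICn) => // H; exfalso; exact: D0x (H _ Cnx).
      case: (ch _ _ ID0 ICn) => // H'; exfalso; exact: D0x (H' _ Cnx).
    have : (C0 `&` ~` D0) y by apply/XE; exists n => //; split => //; apply: D0Cn.
    by case.
have CnC0 : C n `<=` C0.
  move=> z Cnz; have [Dnz|Dnz] := pselect (D n z).
    by apply: D0C0; rewrite -DnD0.
  by have [] : (C0 `&` ~` D0) z by apply/XE; exists n.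
have -> : \sum_(i < n) (v (C i) - v (D i)) = v C0 - v (C n).
  apply: IH => //.
  apply/seteqP; split => z.
  - move=> [i /= ilt [Ciz Diz]].
    have [] : (C0 `&` ~` D0) z by apply/XE; exists i => //; apply: ltnW.
    move=> C0z _; split => // Cnz; apply: Diz; exact: nest ilt (ltnSn n) _ Cnz.
  - move=> [C0z Cnz].
    have : (C0 `&` ~` D0) z.
      split => // D0z; apply: Cnz; apply: DC => //; by rewrite DnD0.
    move/XE => [i ilt Hz]; exists i => //=.
    rewrite ltnS leq_eqVlt in ilt; case/orP: ilt => [/eqP ein|//].
    by exfalso; apply: Cnz; rewrite -ein; case: Hz.
by rewrite DnD0 addrA subrK.
Qed.


Lemma J_interval I C D : chain I -> I C -> I D -> J_alg I (C `\` D).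
Proof.
move=> ch IC ID; exists 1%N, (fun _ => C), (fun _ => C `&` D); split.
- by move=> i _; split => //; exact: chainI.
- by move=> i _; exact: subIsetl.
- by move=> i; rewrite ltnS ltn0.
- apply/seteqP; split => x.
  + by move=> [Cx Dx]; exists 0%N => //; split => // -[].
  + by move=> [i _ [Cx nCDx]]; split => // Dx; apply: nCDx.
Qed.

Lemma mu_J_interval v I C D : chain I -> I C -> I D -> D `<=` C ->
  mu_J v I (C `\` D) = v C - v D.
Proof.
move=> ch IC ID DC; apply: mu_J_eq.
  exists 1%N, (fun _ => C), (fun _ => D); split => //.
  apply/seteqP; split => x.
    + by move=> [Cx Dx]; exists 0%N.
    + by move=> [i _ [Cx nDx]].
move=> n C' D' [ICD DC' CD' E].
by apply: (@interval_sum v I ch n C' D' C D) => //; rewrite -E.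
Qed.

Lemma setD_IE (C D : set T) : C `\` D = C `\` (C `&` D).
Proof.
apply/seteqP; split => x [Cx H]; split => //.
  by move=> [].
by move=> Dx; apply: H.
Qed.

Lemma mu_J_interval' v I C D : chain I -> I C -> I D ->
  mu_J v I (C `\` D) = v C - v (C `&` D).
Proof.
move=> ch IC ID; rewrite setD_IE; apply: mu_J_interval => //.
exact: chainI.
Qed.

Lemma ext_interval v I (mu : {measure set T -> \bar R}) C D :
  chain I -> extremal_measure v I mu -> I C -> I D -> D `<=` C ->
  mu (C `\` D) = (v C - v D)%:E.
Proof.
move=> ch ext IC ID DC; rewrite ext; first by rewrite mu_J_interval.
exact: J_interval.
Qed.

Lemma ext_I v I (mu : {measure set T -> \bar R}) C :
  chain I -> extremal_measure v I mu -> I set0 -> v set0 = 0 -> I C ->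
  mu C = (v C)%:E.
Proof.
move=> ch ext I0 v0 IC; transitivity (mu (C `\` set0)); first by rewrite setD0.
by rewrite (@ext_interval v I mu C set0 ch ext) // v0 subr0.
Qed.

End Part1.

Record sigI {d : measure_display} (T : measurableType d) := SigI {
  sI : set (set T); sI_chain : chain sI; sI0 : sI set0 }.
Arguments sI {d T}. Arguments sI_chain {d T}. Arguments sI0 {d T}.

Definition ctype {d : measure_display} {T : measurableType d} (c : sigI T) : Type := T.

Section Semi.
Context {d : measure_display} {T : measurableType d}.
Variable c : sigI T.

Definition ivl : set (set T) := [set X | exists C D, sI c C /\ sI c D /\ X = C `\` D].

Lemma ivl0 : ivl set0.
Proof. by exists set0, set0; split; [exact: sI0|split; [exact: sI0|rewrite setDv]]. Qed.

Lemma ivlI : setI_closed ivl.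
Proof.
move=> A B [C [D [IC [ID ->]]]] [C' [D' [IC' [ID' ->]]]].
exists (C `&` C'), (D `|` D'); split; first exact: chainI (sI_chain c) IC IC'.
split; first exact: chainU (sI_chain c) ID ID'.
apply/seteqP; split => x.
  by move=> [[Cx Dx] [C'x D'x]]; split => // -[].
by move=> [[Cx C'x] DD]; split; split => // H; apply: DD; [left|right].
Qed.

Lemma ivlD : semi_setD_closed ivl.
Proof.
move=> A B [C [D [IC [ID ->]]]] [C' [D' [IC' [ID' ->]]]].
have ch := sI_chain c.
exists [set C `\` (D `|` C'); (C `&` (C' `&` D')) `\` D]; split.
- exact: finite_set2.
- move=> X [->|->].
    exists C, (D `|` C'); split => //; split => //; exact: chainU.
  exists (C `&` (C' `&` D')), D; split => //; do 2 apply: chainI => //.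
- rewrite bigcup_setU !bigcup_set1; apply/seteqP; split => x.
    move=> [[Cx Dx] nB].
    have [C'x|C'x] := pselect (C' x).
      by right; split => //; split => //; split => //; apply/not_notP => H; apply: nB.
    by left; split => //; case.
  move=> [[Cx DC'x]|[[Cx [C'x D'x]] Dx]].
    split; first by split => // Dx; apply: DC'x; left.
    by move=> [C'x _]; apply: DC'x; right.
  by split => // -[].
- move=> X Y HX HY; case: HX => ->; case: HY => -> // [x Hx]; exfalso; move: Hx.
    by move=> [[Cx DC'x] [[_ [C'x _]] _]]; apply: DC'x; right.
  by move=> [[[_ [C'x _]] _] [Cx DC'x]]; apply: DC'x; right.
Qed.

End Semi.

HB.instance Definition _ {d : measure_display} {T : measurableType d} (c : sigI T) :=
  Pointed.on (ctype c).
HB.instance Definition _ {d : measure_display} {T : measurableType d} (c : sigI T) :=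
  @isSemiRingOfSets.Build default_measure_display (ctype c) (ivl c) (ivl0 c) (@ivlI _ _ c) (@ivlD _ _ c).

Section Ext.
Context {d : measure_display} {T : measurableType d} {R : realType}.
Variables (v : set T -> R) (c : sigI T).
Hypotheses (HS : in_Sigma (sI c)) (mono : nondecreasing_sf v)
  (cont : continuous_sf v) (v0 : v set0 = 0).

Let ch := sI_chain c.

Definition lam : set (ctype c) -> \bar R := fun X => (`|mu_J v (sI c) X|)%:E.

Lemma lam_ivl X : ivl c X -> lam X = (mu_J v (sI c) X)%:E.
Proof.
move=> [C [D [IC [ID ->]]]]; rewrite /lam mu_J_interval' //.
have [mc _ _ _ _] := HS.
rewrite ger0_norm // subr_ge0; apply: mono; [| |exact: subIsetl].
  by apply: measurableI; apply: mc.
by apply: mc.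
Qed.

Lemma lam0 : lam set0 = 0%E.
Proof.
rewrite lam_ivl; last exact: ivl0.
by rewrite -(setDv set0) mu_J_interval // ?subrr //; exact: sI0.
Qed.

Lemma lam_ge0 X : (0 <= lam X)%E.
Proof. by rewrite lee_fin. Qed.

Lemma lam_ssa : semi_sigma_additive lam.
Proof.
move=> F mF tF mU.
rewrite lam_ivl //.
rewrite (_ : (fun n => \sum_(0 <= i < n) lam (F i))%E =
   (fun n => (\sum_(i < n) mu_J v (sI c) (F i))%:E)); last first.
  apply/funext => n /=; rewrite big_mkord -sumEFin; apply: eq_bigr => i _.
  exact: lam_ivl (mF i).
apply: cvg_EFin; first by apply: nearW.
rewrite (_ : fine \o _ = fun n => \sum_(i < n) mu_J v (sI c) (F i)) //.
have Jiv X : ivl c X -> J_alg (sI c) X.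
  by move=> [C [D [IC [ID ->]]]]; exact: J_interval.
have := (cont _ HS F (fun k => Jiv _ (mF k)) tF (Jiv _ mU)).
exact.
Qed.

HB.instance Definition _ := isMeasure.Build _ (ctype c) R lam lam0 lam_ge0 lam_ssa.


Lemma meas_ivl : (@measurable _ T) = <<s ivl c>>.
Proof.
have [mc _ _ _ gen] := HS.
apply/seteqP; split.
- rewrite -gen; apply: smallest_sub; first exact: smallest_sigma_algebra.
  move=> C IC; apply: sub_sigma_algebra; exists C, set0; split => //.
  by split; [exact: sI0|rewrite setD0].
- apply: smallest_sub; first exact: sigma_algebra_measurable.
  by move=> X [C [D [IC [ID ->]]]]; apply: measurableD; exact: mc.
Qed.

Definition extT : set T -> \bar R := mu_ext (lam : set (ctype c) -> \bar R).

Let ME := @measure_extension _ (ctype c) R lam.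

Lemma extT0 : extT set0 = 0%E.
Proof. have := @measure0 _ _ _ ME. exact. Qed.

Lemma extT_ge0 X : (0 <= extT X)%E.
Proof. have := @measure_ge0 _ _ _ ME X. exact. Qed.

Lemma extT_ssa : semi_sigma_additive extT.
Proof.
move=> F mF tF mU; rewrite meas_ivl in mF mU.
have := @measure_semi_sigma_additive _ _ _ ME F mF tF mU. exact.
Qed.

HB.instance Definition _ := isMeasure.Build _ T R extT extT0 extT_ge0 extT_ssa.

Lemma extT_ivl X : ivl c X -> extT X = (mu_J v (sI c) X)%:E.
Proof.
move=> iX; rewrite /extT measurable_mu_extE //; exact: lam_ivl.
Qed.

Lemma extT_extremal : extremal_measure v (sI c) extT.
Proof.
have [mc _ _ _ _] := HS.
move=> A [n [C [D rep]]].
suff H : forall n C D, J_rep (sI c) A n C D ->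
    extT A = (\sum_(i < n) (v (C i) - v (D i)))%:E.
  transitivity (extT A); first by [].
  rewrite (H _ _ _ rep); congr EFin; symmetry; apply: mu_J_eq.
    by exists n, C, D.
  move=> m C' D' rep'; apply/EFin_inj; by rewrite -(H _ _ _ rep') (H _ _ _ rep).
move=> {rep} {}n {}C {}D [ICD DC CD ->].
pose P := fun i => if (i < n)%N then C i `&` ~` D i else set0.
have mP i : measurable (P i).
  rewrite /P; case: ifP => // ilt.
  apply: measurableI; first exact: mc (ICD i ilt).1.
  apply: measurableC; exact: mc (ICD i ilt).2.
have tP : trivIset setT P.
  apply/trivIsetP => i j _ _ ij.
  wlog lt : i j ij / (i < j)%N.
    move=> Hw; case: (ltngtP i j) => [lt|gt|eq].
    - exact: Hw.
    - by rewrite setIC; apply: Hw => //; rewrite eq_sym.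
    - by rewrite eq eqxx in ij.
  rewrite /P; case: ifP => ilt; last by rewrite set0I.
  case: ifP => jlt; last by rewrite setI0.
  apply/seteqP; split => // x [[Cix Dix] [Cjx Djx]]; apply: Dix.
  exact: (@nest_rep _ _ C D n DC CD i j lt jlt).
have E : \bigcup_(i < n) (C i `&` ~` D i) = \big[setU/set0]_(i < n) P i.
  by rewrite bigcup_mkord; apply: eq_bigr => i _; rewrite /P ltn_ord.
rewrite E (measure_bigsetU _ mP tP n) -sumEFin; apply: eq_bigr => i _.
rewrite /P ltn_ord.
have [IC ID] := ICD i (ltn_ord i).
rewrite -setDE; transitivity (extT (C i `\` D i)); first by [].
rewrite extT_ivl; last by exists (C i), (D i).
by rewrite mu_J_interval //; apply: DC.
Qed.

Lemma exists_extremal : exists mu : {measure set T -> \bar R},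
  extremal_measure v (sI c) mu.
Proof. by exists extT; exact: extT_extremal. Qed.

Lemma mu_eq_extT (mu : {measure set T -> \bar R}) :
  extremal_measure v (sI c) mu -> forall X, measurable X -> mu X = extT X.
Proof.
have [mc _ _ IT _] := HS.
move=> ext X mX.
have Gg : forall i : nat, ivl c ((fun=> setT) i).
  move=> _; exists setT, set0; split => //; split; [exact: sI0|by rewrite setD0].
have gcov : \bigcup_(k : nat) (fun=> setT) k = [set: T].
  by rewrite bigcup_const //; exists 0%N.
have m1m2 : forall A, ivl c A -> mu A = extT A.
  move=> A [C [D [IC [ID ->]]]].
  rewrite extT_ivl; last by exists C, D.
  rewrite mu_J_interval' // setD_IE (ext_interval v (sI c) mu C (C `&` D) ch ext) //.
  all: try exact: chainI; try exact: subIsetl.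
have m1oo : forall k : nat, (mu ((fun=> setT) k) < +oo)%E.
  by move=> _; rewrite (ext_I v (sI c) mu setT ch ext (sI0 c) v0 IT) ltry.
exact: (measure_unique (ivl c) (fun=> setT) meas_ivl (@ivlI _ _ c) Gg gcov mu _ m1m2 m1oo X mX).
Qed.

Lemma approx (mu : {measure set T -> \bar R}) :
  extremal_measure v (sI c) mu -> forall B e, measurable B -> 0 < e ->
  exists A : nat -> set T, [/\ (forall k, ivl c (A k)),
    ~` B `<=` \bigcup_k A k &
    (\sum_(k <oo) mu (A k) < mu (~` B) + e%:E)%E].
Proof.
have [mc _ _ IT _] := HS.
move=> ext B e mB e0.
have mBc : measurable (~` B) by exact: measurableC.
have mivl X : ivl c X -> measurable X.
  by move=> [C [D [IC [ID ->]]]]; apply: measurableD; exact: mc.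
have fin : extT (~` B) \is a fin_num.
  rewrite -(mu_eq_extT mu ext _ mBc) ge0_fin_numE; last exact: measure_ge0.
  apply: (le_lt_trans (y := mu setT)).
    by apply: le_measure => //; rewrite inE.
  by rewrite (ext_I v (sI c) mu setT ch ext (sI0 c) v0 IT) ltry.
have [x [A [mA BA] <-] Hx] := lb_ereal_inf_adherent e0 fin.
exists A; split => //.
rewrite (mu_eq_extT mu ext _ mBc).
rewrite (_ : \sum_(k <oo) mu (A k) = \sum_(k <oo) lam (A k))%E //.
apply: eq_eseriesr => k _.
rewrite (mu_eq_extT mu ext _ (mivl _ (mA k))).
by rewrite /extT measurable_mu_extE //; apply: mA.
Qed.
End Ext.

Section Glue.
Context {d : measure_display} {T : measurableType d}.
Variables (I0 : set (set T)) (HS0 : in_Sigma I0) (K : nat -> set T).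
Hypotheses (mK : forall n, measurable (K n)) (decK : forall n, K n.+1 `<=` K n).

Let Kinf := \bigcap_n K n.

Definition glue : set (set T) :=
  [set X | (exists2 I, I0 I & X = I `&` \bigcap_n K n) \/
           (exists n, exists2 I, I0 I & X = K n.+1 `|` (I `&` K n)) \/
           (exists2 I, I0 I & X = K 0 `|` I)].

Lemma decK_le m n : (m <= n)%N -> K n `<=` K m.
Proof.
elim: n => [|n IH]; first by rewrite leqn0 => /eqP ->.
rewrite leq_eqVlt => /orP[/eqP -> //|]; rewrite ltnS => mn.
exact: subset_trans (decK n) (IH mn).
Qed.

Lemma Kinf_sub n : Kinf `<=` K n.
Proof. by move=> x Hx; apply: Hx. Qed.

Lemma glue_K n : glue (K n).
Proof.
have [_ _ _ I0T _] := HS0.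
right; left; exists n, setT => //; rewrite setTI setUidr //.
Qed.

Lemma glue_Kinf : glue Kinf.
Proof.
have [_ _ _ I0T _] := HS0.
by left; exists setT => //; rewrite setTI.
Qed.

Lemma find_gap x : K 0 x -> ~ Kinf x -> exists n, K n x /\ ~ K n.+1 x.
Proof.
move=> K0x nK; apply: contrapT => H; apply: nK => n _.
elim: n => [//|n IH]; apply: contrapT => nK; apply: H; by exists n.
Qed.

Lemma glue_Sigma : in_Sigma glue.
Proof.
have [mI0 ch0 I00 I0T gen0] := HS0.
have mKinf : measurable Kinf by exact: bigcapT_measurable.
have mglue : glue `<=` measurable.
  move=> X [[I HI ->]|[[n [I HI ->]]|[I HI ->]]].
  - by apply: measurableI => //; exact: mI0.
  - by apply: measurableU => //; apply: measurableI => //; exact: mI0.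
  - by apply: measurableU => //; exact: mI0.
split => //.
- move=> X Y [[I HI ->]|[[n [I HI ->]]|[I HI ->]]]
             [[J HJ ->]|[[m [J HJ ->]]|[J HJ ->]]].
  + by case: (ch0 I J HI HJ) => H; [left|right]; apply: setSI.
  + left; move=> x [_ Kx]; left; exact: Kinf_sub Kx.
  + left; move=> x [_ Kx]; left; exact: Kinf_sub Kx.
  + right; move=> x [_ Kx]; left; exact: Kinf_sub Kx.
  + case: (ltngtP n m) => [nm|mn|<-].
    * right => x [Kx|[_ Kx]]; left; apply: (decK_le _ _ nm) => //; exact: decK.
    * left => x [Kx|[_ Kx]]; left; apply: (decK_le _ _ mn) => //; exact: decK.
    * by case: (ch0 I J HI HJ) => H; [left|right]; apply: setUS; apply: setSI.
  + left => x [Kx|[_ Kx]]; left; apply: (decK_le _ _ (leq0n n)) => //; exact: decK.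
  + right; move=> x [_ Kx]; left; exact: Kinf_sub Kx.
  + right => x [Kx|[_ Kx]]; left; apply: (decK_le _ _ (leq0n m)) => //; exact: decK.
  + by case: (ch0 I J HI HJ) => H; [left|right]; apply: setUS.
- by left; exists set0 => //; rewrite set0I.
- by right; right; exists setT => //; rewrite setUT.
- apply/seteqP; split.
    apply: smallest_sub => //; exact: sigma_algebra_measurable.
  rewrite -gen0; apply: smallest_sub; first exact: smallest_sigma_algebra.
  move=> I HI.
  pose M := g_sigma_algebraType glue.
  have gM X : glue X -> measurable (X : set M).
    by move=> gX; apply: sub_sigma_algebra.
  change (measurable (I : set M)).
  have -> : I = (I `&` Kinf) `|` (\bigcup_n ((K n.+1 `|` (I `&` K n)) `\` K n.+1))
                `|` ((K 0 `|` I) `\` K 0).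
    apply/seteqP; split => x.
      move=> Ix.
      have [Kix|nKix] := pselect (Kinf x); first by left; left.
      have [K0x|nK0x] := pselect (K 0 x); last by right; split => //; right.
      have [n [Knx nKn1x]] := find_gap _ K0x nKix.
      by left; right; exists n => //; split => //; right.
    by move=> [[[]//|[n _ [[//|[]//]]]]|[[//|//]]].
  apply: measurableU; first apply: measurableU.
  - by apply: gM; left; exists I.
  - apply: bigcupT_measurable => n; apply: measurableD; apply: gM; last exact: glue_K.
    by right; left; exists n, I.
  - by apply: measurableD; apply: gM; [right; right; exists I|exact: glue_K].
Qed.

End Glue.

Section ContDec.
Context {d : measure_display} {T : measurableType d} {R : realType}.
Variables (v : set T -> R) (cont : continuous_sf v).
Variables (I0 : set (set T)) (HS0 : in_Sigma I0) (K : nat -> set T).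
Hypotheses (mK : forall n, measurable (K n)) (decK : forall n, K n.+1 `<=` K n).

Lemma v_cvg_dec : (fun n => v (K n)) @ \oo --> v (\bigcap_n K n).
Proof.
set G := glue I0 K.
have HG : in_Sigma G by apply: glue_Sigma.
have chG : chain G by case: HG.
have gK n : G (K n) by apply: glue_K.
have gKi : G (\bigcap_n K n) by apply: glue_Kinf.
pose F k := K k `\` K k.+1.
have JF k : J_alg G (F k) := J_interval _ _ _ chG (gK k) (gK k.+1).
have tF : trivIset setT F.
  apply/trivIsetP => i j _ _ ij.
  wlog lt : i j ij / (i < j)%N.
    move=> Hw; case: (ltngtP i j) => [lt|gt|eq].
    - exact: Hw.
    - by rewrite setIC; apply: Hw => //; rewrite eq_sym.
    - by rewrite eq eqxx in ij.
  apply/seteqP; split => // x [[Kix nKi1x] [Kjx _]]; apply: nKi1x.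
  exact: (@decK_le _ _ K decK _ _ lt).
have K0i : \bigcap_n K n `<=` K 0 by move=> x Hx; apply: Hx.
have UF : \bigcup_k F k = K 0 `\` \bigcap_n K n.
  apply/seteqP; split => x.
    move=> [k _ [Kkx nKk1x]]; split.
      exact: (@decK_le _ _ K decK _ _ (leq0n k)).
    by move=> Hi; apply: nKk1x; apply: Hi.
  move=> [K0x nKi]; have [n [Knx nKn1x]] := @find_gap _ _ K x K0x nKi.
  by exists n.
have JU : J_alg G (\bigcup_k F k) by rewrite UF; exact: J_interval.
have := cont _ HG F JF tF JU.
rewrite UF mu_J_interval //.
rewrite (_ : (fun n => \sum_(k < n) mu_J v G (F k)) = fun n => v (K 0) - v (K n)); last first.
  apply/funext => n; elim: n => [|n IH]; first by rewrite big_ord0 subrr.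
  rewrite big_ord_recr /= IH /F mu_J_interval //.
  by rewrite addrA subrK.
move=> H.
have H2 := cvgB (cvg_cst (v (K 0))) H.
have E : v (K 0) - (v (K 0) - v (\bigcap_n K n)) = v (\bigcap_n K n) by rewrite opprB addrC subrK.
rewrite E in H2.
have E2 : (fun=> v (K 0)) - (fun n : nat => v (K 0) - v (K n)) = (fun n => v (K n)).
  by apply/funext => n /=; rewrite opprB addrC subrK.
rewrite E2 in H2; apply: H2; exact: eventually_filter.
Qed.

End ContDec.

Section Claim.
Context {d : measure_display} {T : measurableType d} {R : realType}.
Variables (v : set T -> R) (I : set (set T)) (mu : {measure set T -> \bar R}).
Hypotheses (sub : submodular_sf v) (ch : chain I) (mI : I `<=` measurable)
  (ext : extremal_measure v I mu).
Variables (P Q : nat -> set T).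
Hypotheses (IP : forall k, I (P k)) (IQ : forall k, I (Q k)) (QP : forall k, Q k `<=` P k).

Definition Wset m C D := (C `\` D) `\` \bigcup_(k < m) (P k `\` Q k).

Lemma WsetE m C D x : Wset m C D x <->
  [/\ C x, ~ D x & forall k, (k < m)%N -> P k x -> Q k x].
Proof.
split.
  move=> [[Cx Dx] nU]; split => // k km Pkx; apply: contrapT => Qkx.
  by apply: nU; exists k.
move=> [Cx Dx H]; split => // -[k /= km [Pkx Qkx]]; apply: Qkx; exact: H.
Qed.

Lemma mWset m C D : I C -> I D -> measurable (Wset m C D).
Proof.
move=> IC ID; apply: measurableD; first by apply: measurableD; exact: mI.
apply: bigcup_measurable => k _; apply: measurableD; exact: mI.
Qed.

Lemma claim m : forall C D Z, I C -> I D -> I Z ->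
  Wset m C D `&` Z = set0 ->
  (mu (Wset m C D) <= (v (Wset m C D `|` Z) - v Z)%:E)%E.
Proof.
elim: m => [|m IH] C D Z IC ID IZ WZ.
- have [W0|/eqP/set0P [w Ww]] := pselect (Wset 0 C D = set0).
    by rewrite W0 measure0 set0U subrr.
  have /WsetE [Cw Dw _] := Ww.
  have DC : D `<=` C.
    by case: (ch C D IC ID) => // CD; exfalso; exact: Dw (CD _ Cw).
  have ZD : Z `<=` D.
    move=> x Zx; apply: contrapT => Dx.
    have Cx : C x.
      case: (ch Z C IZ IC) => [ZC|CZ]; first exact: ZC.
      have : (Wset 0 C D `&` Z) w by split => //; exact: CZ.
      by rewrite WZ.
    have : (Wset 0 C D `&` Z) x by split => //; apply/WsetE; split.
    by rewrite WZ.
  have WE : Wset 0 C D = C `\` D.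
    by apply/seteqP; split => x; [move/WsetE => [] | move=> [Cx Dx]; apply/WsetE; split].
  rewrite WE (ext_interval v I mu C D ch ext) // lee_fin.
  have mW : measurable (C `\` D) by apply: measurableD; exact: mI.
  have mZ : measurable Z by exact: mI.
  have mD : measurable D by exact: mI.
  have := sub (C `\` D `|` Z) D (measurableU _ _ mW mZ) mD.
  have -> : C `\` D `|` Z `|` D = C.
    apply/seteqP; split => x.
      by move=> [[[]//|/ZD/DC]|/DC].
    by move=> Cx; have [Dx|Dx] := pselect (D x); [right|left; left].
  have -> : (C `\` D `|` Z) `&` D = Z.
    apply/seteqP; split => x.
      by move=> [[[]//|//] _].
    by move=> Zx; split; [right|exact: ZD].
  move=> H; lra.
- have [W0|/eqP/set0P [w Ww]] := pselect (Wset m.+1 C D = set0).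
    by rewrite W0 measure0 set0U subrr.
  set W := Wset m.+1 C D.
  have IDP : I (D `|` P m) by exact: chainU.
  have ICQ : I (C `&` Q m) by exact: chainI.
  set W1 := Wset m C (D `|` P m).
  set W2 := Wset m (C `&` Q m) D.
  have WE : W = W1 `|` W2.
    apply/seteqP; split => x.
      move/WsetE => [Cx Dx H].
      have [Qx|Qx] := pselect (Q m x).
        right; apply/WsetE; split => // k km; apply: H; exact: ltnW.
      left; apply/WsetE; split => //.
        by move=> [//|Px]; apply: Qx; exact: H.
      by move=> k km; apply: H; exact: ltnW.
    move=> [/WsetE [Cx DPx H]|/WsetE [[Cx Qx] Dx H]]; apply/WsetE; split => //.
    + by move=> Dx; apply: DPx; left.
    + move=> k; rewrite ltnS leq_eqVlt => /orP[/eqP -> Px|km]; last exact: H.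
      by exfalso; apply: DPx; right.
    + by move=> k; rewrite ltnS leq_eqVlt => /orP[/eqP -> //|km]; exact: H.
  have W1Q : W1 `&` Q m = set0.
    apply/seteqP; split => // x [/WsetE [_ DPx _] Qx].
    by apply: DPx; right; exact: QP.
  have W2Q : W2 `<=` Q m by move=> x /WsetE [[_ Qx] _ _].
  have W2W : W2 `<=` W by rewrite WE => x ?; right.
  have W1W : W1 `<=` W by rewrite WE => x ?; left.
  have W12 : W1 `&` W2 = set0.
    by apply/seteqP; split => // x [W1x /W2Q Qx]; rewrite -W1Q.
  have mW1 : measurable W1 by exact: mWset.
  have mW2 : measurable W2 by exact: mWset.
  have mW : measurable W by exact: mWset.
  have W2Z : W2 `&` Z = set0.
    apply/seteqP; split => // x [/W2W Wx Zx]; rewrite -WZ; by split.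
  case: (ch Z (Q m) IZ (IQ m)) => [ZQ|QZ]; last first.
    have W20 : W2 = set0.
      apply/seteqP; split => // x W2x; rewrite -W2Z; split => //.
      exact/QZ/W2Q.
    have WW1 : W = W1 by rewrite WE W20 setU0.
    rewrite WW1; apply: IH => //.
    apply/seteqP; split => // x [/W1W Wx Zx]; rewrite -WZ; by split.
  have H1 := IH C (D `|` P m) (Q m) IC IDP (IQ m) W1Q.
  have H2 := IH (C `&` Q m) D Z ICQ ID IZ W2Z.
  rewrite -/W1 in H1; rewrite -/W2 in H2.
  have mZ : measurable Z by exact: mI.
  have mQ : measurable (Q m) by exact: mI.
  have := sub (W `|` Z) (Q m) (measurableU _ _ mW mZ) mQ.
  have -> : W `|` Z `|` Q m = W1 `|` Q m.
    rewrite WE; apply/seteqP; split => x.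
      by move=> [[[W1x|/W2Q Qx]|/ZQ Qx]|Qx]; [left|right|right|right].
    by move=> [W1x|Qx]; [left; left; left|right].
  have -> : (W `|` Z) `&` Q m = W2 `|` Z.
    rewrite WE; apply/seteqP; split => x.
      move=> [[[W1x|W2x]|Zx] Qx]; [|by left|by right].
      by exfalso; have : (W1 `&` Q m) x by []; rewrite W1Q.
    by move=> [W2x|Zx]; split; [left; right| exact: W2Q| right| exact: ZQ].
  move=> Hs.
  have -> : mu W = (mu W1 + mu W2)%E by rewrite WE measureU.
  apply: le_trans (leeD H1 H2) _.
  rewrite -EFinD lee_fin; lra.
Qed.

End Claim.

Section AB.
Context {d : measure_display} {T : measurableType d} {R : realType}.
Variables (v : set T -> R) (I : set (set T)) (mu : {measure set T -> \bar R}).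
Hypotheses (HS : in_Sigma I) (mono : nondecreasing_sf v) (cont : continuous_sf v)
  (v0 : v set0 = 0) (sub : submodular_sf v) (ext : extremal_measure v I mu).

Lemma ab_le B : measurable B -> (mu B <= (v B)%:E)%E.
Proof.
have [mI chI I0 IT gen] := HS.
pose c := @SigI _ T I chI I0.
have HSc : in_Sigma (sI c) := HS.
have extc : extremal_measure v (sI c) mu := ext.
have muT : mu setT = (v setT)%:E by exact: (ext_I v I mu setT chI ext I0 v0 IT).
have fin X : measurable X -> mu X \is a fin_num.
  move=> mX; rewrite ge0_fin_numE; last exact: measure_ge0.
  apply: (le_lt_trans (y := mu setT)); last by rewrite muT ltry.
  by apply: le_measure => //; rewrite inE.
pose m X := fine (mu X).
have muE X : measurable X -> mu X = (m X)%:E by move=> mX; rewrite fineK //; exact: fin.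
move=> mB; apply/lee_addgt0Pr => e e0.
have [A [ivA BA Hs]] := approx v c HSc mono cont v0 mu extc B e mB e0.
have /choice [pq Hpq] : forall k, exists pq : set T * set T,
    [/\ I pq.1, I pq.2 & A k = pq.1 `\` pq.2].
  by move=> k; have [C [D [IC [ID E]]]] := ivA k; exists (C, D).
pose P k := (pq k).1; pose Q k := (pq k).1 `&` (pq k).2.
have IP k : I (P k) by case: (Hpq k).
have IQ k : I (Q k) by case: (Hpq k) => ? ? _; exact: chainI.
have QP k : Q k `<=` P k by exact: subIsetl.
have AE k : A k = P k `\` Q k by case: (Hpq k) => _ _ ->; exact: setD_IE.
have mA k : measurable (A k).
  by rewrite AE; apply: measurableD; exact: mI.
pose Kn n := Wset P Q n setT set0.
have mKn n : measurable (Kn n) by exact: (mWset I mI P Q IP IQ n setT set0 IT I0).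
have decK n : Kn n.+1 `<=` Kn n.
  move=> x /WsetE [Tx nx H]; apply/WsetE; split => // k kn; apply: H.
  exact: ltn_trans kn _.
have Kinf : \bigcap_n Kn n = ~` \bigcup_k A k.
  apply/seteqP; split => x.
    move=> Hx [k _]; rewrite AE => -[Pkx Qkx]; apply: Qkx.
    by have /WsetE [_ _ H] := Hx k.+1 Logic.I; apply: H.
  move=> nU n _; apply/WsetE; split => // k kn Pkx; apply: contrapT => Qkx.
  by apply: nU; exists k => //; rewrite AE.
have cl n : (mu (Kn n) <= (v (Kn n))%:E)%E.
  have := claim v I mu sub chI mI ext P Q IP IQ QP n setT set0 set0 IT I0 I0 (setI0 _).
  by rewrite setU0 v0 subr0.
have mKi : measurable (\bigcap_n Kn n) by exact: bigcapT_measurable.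
have Hm : (mu \o Kn) @ \oo --> mu (\bigcap_n Kn n).
  apply: nonincreasing_cvg_mu => //.
    by rewrite (muE _ (mKn 0%N)) ltry.
  by apply/nonincreasing_seqP => n; rewrite subsetEset; exact: decK.
have Hv := v_cvg_dec v cont I HS Kn mKn decK.
have HvE : (fun n => (v (Kn n))%:E) @ \oo --> (v (\bigcap_n Kn n))%:E.
  by apply: cvg_EFin; [exact: nearW|exact: Hv].
have Kle : (mu (\bigcap_n Kn n) <= (v (\bigcap_n Kn n))%:E)%E.
  by apply: (lee_cvg_to Hm HvE); apply: nearW.
have vle : v (\bigcap_n Kn n) <= v B.
  apply: mono => //; rewrite Kinf => x nU; apply: contrapT => nBx.
  exact: nU (BA _ nBx).
have mU : measurable (\bigcup_k A k) by exact: bigcupT_measurable.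
have mBc : measurable (~` B) by exact: measurableC.
have Usub : (mu (\bigcup_k A k) <= \sum_(k <oo) mu (A k))%E.
  by apply: measure_sigma_subadditive.
have E1 : mu setT = (mu B + mu (~` B))%E.
  by rewrite -measureU ?setUCr // setICr.
have E2 : mu setT = (mu (\bigcup_k A k) + mu (\bigcap_n Kn n))%E.
  by rewrite Kinf -measureU ?setUCr // ?setICr //; rewrite -Kinf.
have U3 := le_lt_trans Usub Hs.
rewrite Kinf in Kle vle E2.
have mKc : measurable (~` \bigcup_k A k) by exact: measurableC.
rewrite (muE _ measurableT) (muE _ mB) (muE _ mBc) -EFinD in E1.
have {}E1 := EFin_inj E1.
rewrite (muE _ measurableT) (muE _ mU) (muE _ mKc) -EFinD in E2.
have {}E2 := EFin_inj E2.
rewrite (muE _ mU) (muE _ mBc) -EFinD lte_fin in U3.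
rewrite (muE _ mKc) lee_fin in Kle.
rewrite (muE _ mB) -EFinD lee_fin; lra.
Qed.

End AB.

Section Main.
Context {d : measure_display} {T : measurableType d} {R : realType}.
Variables (v : set T -> R).
Hypotheses (hS : exists I : set (set T), in_Sigma I) (mono : nondecreasing_sf v)
  (cont : continuous_sf v) (v0 : v set0 = 0).

Lemma ex_ext (I : set (set T)) : in_Sigma I -> exists mu : {measure set T -> \bar R}, extremal_measure v I mu.
Proof.
move=> HI; have [mI chI I0 IT gen] := HI.
exact: (exists_extremal v (@SigI _ T I chI I0) HI mono cont).
Qed.

Lemma three_chain (A B C : set T) : measurable A -> measurable B -> measurable C ->
  B `<=` A -> C `<=` B -> exists I, [/\ in_Sigma I, I A, I B & I C].
Proof.
move=> mA mB mC BA CB; have [I0 HS0] := hS.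
pose K n := match n with 0 => A | 1 => B | _ => C end.
have mK n : measurable (K n) by case: n => [|[|n]].
have decK n : K n.+1 `<=` K n by case: n => [|[|n]].
exists (glue I0 K); split; first exact: glue_Sigma.
- exact: (glue_K I0 HS0 K decK 0).
- exact: (glue_K I0 HS0 K decK 1).
- exact: (glue_K I0 HS0 K decK 2).
Qed.

Lemma core_of (I : set (set T)) (mu : {measure set T -> \bar R}) : in_Sigma I -> extremal_measure v I mu ->
  (forall B, measurable B -> (mu B <= (v B)%:E)%E) -> core_minus v setT mu.
Proof.
move=> HI ext le; have [mI chI I0 IT gen] := HI; split.
- by rewrite setCT measure0.
- exact: (ext_I v I mu setT chI ext I0 v0 IT).
- by move=> B mB _; exact: le.
Qed.

Lemma a_b : submodular_sf v -> forall I mu, in_Sigma I ->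
  extremal_measure v I mu -> core_minus v setT mu.
Proof.
move=> sub I mu HI ext; apply: (core_of _ _ HI ext) => B mB.
exact: (ab_le v I mu HI mono cont v0 sub ext B mB).
Qed.

Lemma b_a : (forall I mu, in_Sigma I -> extremal_measure v I mu ->
  core_minus v setT mu) -> submodular_sf v.
Proof.
move=> Hb A B mA mB.
have mU := measurableU _ _ mA mB; have mI' := measurableI _ _ mA mB.
have [I [HI IU IA IAB]] := three_chain _ _ _ mU mA mI' (@subsetUl _ A B) (@subIsetl _ A B).
have [mu ext] := ex_ext _ HI.
have [mIs chI I0 IT gen] := HI.
have [_ _ Hle] := Hb I mu HI ext.
have := Hle B mB (subsetT B).
have mD : measurable ((A `|` B) `\` A) by exact: measurableD.
have EB : mu B = (mu (A `&` B) + mu ((A `|` B) `\` A))%E.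
  rewrite -measureU //; last first.
    by apply/seteqP; split => // x [[Ax _] [_ nAx]].
  congr (mu _); apply/seteqP; split => x.
    by move=> Bx; have [Ax|Ax] := pselect (A x); [left|right] => //; split => //; right.
  by move=> [[]|[[|]]].
rewrite EB (ext_I v I mu _ chI ext I0 v0 IAB).
rewrite (ext_interval v I mu _ _ chI ext IU IA (@subsetUl _ A B)) -EFinD lee_fin => H.
lra.
Qed.

Lemma a_c : submodular_sf v -> forall A, measurable A ->
  (v A)%:E = ereal_sup [set mu A | mu in
     [set mu : {measure set T -> \bar R} |
       exists I, in_Sigma I /\ extremal_measure v I mu]].
Proof.
move=> sub A mA; apply/eqP; rewrite eq_le; apply/andP; split.
  have [I [HI IA _ _]] := three_chain _ _ _ mA mA mA (@subset_refl _ A) (@subset_refl _ A).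
  have [mu ext] := ex_ext _ HI.
  have [mIs chI I0 IT gen] := HI.
  rewrite -(ext_I v I mu A chI ext I0 v0 IA).
  by apply: ereal_sup_ubound; exists mu => //; exists I.
apply: ge_ereal_sup => x [mu [I [HI ext]] <-].
exact: (ab_le v I mu HI mono cont v0 sub ext A mA).
Qed.

Lemma c_b : (forall A, measurable A ->
  (v A)%:E = ereal_sup [set mu A | mu in
     [set mu : {measure set T -> \bar R} |
       exists I, in_Sigma I /\ extremal_measure v I mu]]) ->
  (forall I mu, in_Sigma I -> extremal_measure v I mu -> core_minus v setT mu).
Proof.
move=> Hc I mu HI ext; apply: (core_of _ _ HI ext) => B mB.
by rewrite Hc //; apply: ereal_sup_ubound; exists mu => //; exists I.
Qed.


Lemma a_d : submodular_sf v -> forall A B, measurable A -> measurable B -> B `<=` A ->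
  (v B)%:E = ereal_sup [set mu B | mu in core_minus v A].
Proof.
move=> sub A B mA mB BA; apply/eqP; rewrite eq_le; apply/andP; split; last first.
  by apply: ge_ereal_sup => x [mu [_ _ H] <-]; exact: H.
have [I [HI IA IB _]] := three_chain _ _ _ mA mB mB BA (@subset_refl _ B).
have [mu ext] := ex_ext _ HI.
have [mIs chI I0 IT gen] := HI.
pose mu' := mrestr mu mA.
have Emu' X : mu' X = mu (X `&` A) by [].
rewrite -(ext_I v I mu B chI ext I0 v0 IB).
apply: ereal_sup_ubound; exists (mu' : {measure set T -> \bar R}); last first.
  by transitivity (mu (B `&` A)); [|rewrite setIidl].
split.
- by transitivity (mu (~` A `&` A)); [|rewrite setICl measure0].
- by transitivity (mu (A `&` A)); [|rewrite setIid (ext_I v I mu A chI ext I0 v0 IA)].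
- move=> C mC CA; suff : (mu (C `&` A) <= (v C)%:E)%E by [].
  rewrite setIidl //.
  exact: (ab_le v I mu HI mono cont v0 sub ext C mC).
Qed.

Lemma d_a : (forall A B, measurable A -> measurable B -> B `<=` A ->
  (v B)%:E = ereal_sup [set mu B | mu in core_minus v A]) -> submodular_sf v.
Proof.
move=> Hd A B mA mB.
have mU := measurableU _ _ mA mB; have mI' := measurableI _ _ mA mB.
have IU : A `&` B `<=` A `|` B by move=> x [Ax _]; left.
have H := Hd _ _ mU mI' IU.
apply/ler_addgt0Pr => e e0.
have : ((v (A `&` B) - e)%:E < ereal_sup [set mu (A `&` B) | mu in core_minus v (A `|` B)])%E.
  by rewrite -H lte_fin; lra.
move/ereal_sup_gt => [y [mu [c1 c2 c3] <-] Hy].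
have fin X : measurable X -> X `<=` A `|` B -> mu X \is a fin_num.
  move=> mX XU; rewrite ge0_fin_numE; last exact: measure_ge0.
  by apply: le_lt_trans (c3 X mX XU) _; rewrite ltry.
pose m X := fine (mu X).
have muE X : measurable X -> X `<=` A `|` B -> mu X = (m X)%:E.
  by move=> mX XU; rewrite fineK //; exact: fin.
have mBA : measurable (B `\` A) by exact: measurableD.
have BAU : B `\` A `<=` A `|` B by move=> x [Bx _]; right.
have AU : A `<=` A `|` B by move=> x Ax; left.
have BU : B `<=` A `|` B by move=> x Bx; right.
have EU : mu (A `|` B) = (mu A + mu (B `\` A))%E.
  rewrite -measureU //; last by apply/seteqP; split => // x [Ax [_ nAx]].
  congr (mu _); apply/seteqP; split => x.
    move=> [Ax|Bx]; first by left.
    by have [Ax|Ax] := pselect (A x); [left|right].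
  by move=> [Ax|[Bx _]]; [left|right].
have EB : mu B = (mu (A `&` B) + mu (B `\` A))%E.
  rewrite -measureU //; last by apply/seteqP; split => // x [[Ax _] [_ nAx]].
  congr (mu _); apply/seteqP; split => x.
    by move=> Bx; have [Ax|Ax] := pselect (A x); [left|right].
  by move=> [[]|[]].
have cA := c3 A mA AU; have cB := c3 B mB BU.
rewrite (muE _ mU (@subset_refl _ _)) in c2.
rewrite (muE _ mA AU) lee_fin in cA.
rewrite (muE _ mB BU) lee_fin in cB.
rewrite (muE _ mI' IU) lte_fin in Hy.
rewrite (muE _ mU (@subset_refl _ _)) (muE _ mA AU) (muE _ mBA BAU) -EFinD in EU.
rewrite (muE _ mB BU) (muE _ mI' IU) (muE _ mBA BAU) -EFinD in EB.
have {}c2 := EFin_inj c2; have {}EU := EFin_inj EU; have {}EB := EFin_inj EB.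
lra.
Qed.

End Main.

Theorem theorem7 (d : measure_display) (T : measurableType d) (R : realType)
  (v : set T -> R) :
  (exists I : set (set T), in_Sigma I) ->
  nondecreasing_sf v -> continuous_sf v -> v set0 = 0 ->
  [/\ submodular_sf v <->
        (forall I mu, in_Sigma I -> extremal_measure v I mu ->
           core_minus v setT mu),
      submodular_sf v <->
        (forall A, measurable A ->
           (v A)%:E = ereal_sup [set mu A | mu in
              [set mu : {measure set T -> \bar R} |
                 exists I, in_Sigma I /\ extremal_measure v I mu]]) &
      submodular_sf v <->
        (forall A B, measurable A -> measurable B -> B `<=` A ->
           (v B)%:E = ereal_sup [set mu B | mu in core_minus v A])].
Proof.
move=> hS mono cont v0; split.
- split; first exact: a_b.
  exact: b_a.
- split; first exact: a_c.
  by move=> Hc; apply: b_a => //; apply: c_b.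
- split; first exact: a_d.
  exact: d_a.
Qed.
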